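(* A functional $F\colon\Sigma^{**}\to\mathcal B$ is $\Sigma^{**}$-restricted polynomial-time computable if and only if it has a total polynomial-time computable extension $\tilde F\colon\mathcal B\to\mathcal B$; i.e. $\mathrm P(\Sigma^{**})=\mathrm P|_{\Sigma^{**}}$.
   Context: $\Sigma=\{0,1\}$, $\mathcal B=(\Sigma^* )^{\Sigma^*}$ is the set of total string functions; $\Sigma^{**}$ is the set of length-monotone $\varphi\in\mathcal B$, i.e. $|\mathbf a|\le|\mathbf b|\Rightarrow|\varphi(\mathbf a)|\le|\varphi(\mathbf b)|$. An oracle Turing machine $M^?$ with oracle $\varphi$ replaces, upon entering its query state, the query-tape content $\mathbf b$ by $\varphi(\mathbf b)$ in one time step; $\operatorname{time}_{M^\varphi}(\mathbf a)$ is its number of steps on input $\mathbf a$. $M^?$ computes $F\colon A\to\mathcal B$ if $M^\varphi=F(\varphi)$ for all $\varphi\in A$. The size function is $|\varphi|(n)=\max\{|\varphi(\mathbf a)|:|\mathbf a|\le n\}$. Second-order polynomials are the smallest class of functions $\mathbb N^{\mathbb N}\times\mathbb N\to\mathbb N$ containing all $(l,n)\mapsto p(n)$ for polynomials $p$ with natural coefficients and closed under pointwise sum, pointwise product, and $P\mapsto P^+$, $P^+(l,n)=l(P(l,n))$. For $A\subseteq\mathcal B$, $F\colon A\to\mathcal B$ is $A$-restricted polynomial-time computable if some machine computing $F$ satisfies $\operatorname{time}_{M^\varphi}(\mathbf a)\le P(|\varphi|,|\mathbf a|)$ for all $\varphi\in A$, $\mathbf a\in\Sigma^*$, for some second-order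 polynomial $P$. A total functional is polynomial-time computable if this holds with $A=\mathcal B$. *)

(* Defs.v *)
From mathcomp Require Import all_boot.
Set Implicit Arguments. Unset Strict Implicit. Unset Printing Implicit Defensive.

Notation str := (seq bool).

(** Length-monotone functions: Sigma^{**}. *)
Definition length_monotone (phi : str -> str) : Prop :=
  forall a b : str, size a <= size b -> size (phi a) <= size (phi b).

Fixpoint strings_upto (n : nat) : seq str :=
  match n with
  | 0 => [:: [::]]
  | n'.+1 => [:: [::]] ++ [seq x :: s | x <- [:: false; true], s <- strings_upto n']
  end.

Definition size_fun (phi : str -> str) (n : nat) : nat :=
  \max_(a <- strings_upto n) size (phi a).

Inductive sopoly : Type :=
  | SPpoly : seq nat -> sopoly
  | SPadd  : sopoly -> sopoly -> sopoly
  | SPmul  : sopoly -> sopoly -> sopoly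
  | SPapp  : sopoly -> sopoly.

Fixpoint sopoly_eval (P : sopoly) (l : nat -> nat) (n : nat) : nat :=
  match P with
  | SPpoly cs => \sum_(i < size cs) nth 0 cs i * n ^ i
  | SPadd P1 P2 => sopoly_eval P1 l n + sopoly_eval P2 l n
  | SPmul P1 P2 => sopoly_eval P1 l n * sopoly_eval P2 l n
  | SPapp P1 => l (sopoly_eval P1 l n)
  end.

(** Tape alphabet {blank,0,1} = option bool.
    Tapes are one-way infinite (cells indexed by nat), represented by their
    finite content (everything beyond is blank) and the head position.
    Tape 0 = input tape, tape 1 = query tape, tape 2 = output tape,
    tapes 3 .. 3+k-1 = work tapes. *)
Definition sym := option bool.
Inductive move := MoveL | MoveS | MoveR.
Definition tape := (seq sym * nat)%type.
Definition tape0 : tape := ([::], 0).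
Definition action := (sym * move)%type.

Record OTM := {
  otm_Q : finType;
  otm_k : nat;                      (* number of work tapes *)
  otm_start : otm_Q;
  otm_halt : otm_Q;
  otm_query : otm_Q;
  otm_answer : otm_Q;               (* state after an oracle call *)
  otm_delta : otm_Q -> seq sym -> otm_Q * seq action
}.

Definition ntapes (M : OTM) := (otm_k M).+3.

Definition read (t : tape) : sym := nth None t.1 t.2.

Definition do_action (a : action) (t : tape) : tape :=
  let s := set_nth None t.1 t.2 a.1 in
  match a.2 with
  | MoveL => (s, t.2.-1)
  | MoveS => (s, t.2)
  | MoveR => (s, t.2.+1)
  end.

Fixpoint contents (s : seq sym) : str :=
  match s with
  | Some b :: s' => b :: contents s'
  | _ => [::]
  end.

Definition encode (a : str) : tape := (map Some a, 0).

Definition config (M : OTM) := (otm_Q M * seq tape)%type.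

Definition init (M : OTM) (a : str) : config M :=
  (otm_start M, encode a :: nseq (ntapes M).-1 tape0).

Definition step (M : OTM) (phi : str -> str) (c : config M) : config M :=
  if c.1 == otm_halt M then c
  else if c.1 == otm_query M then
    (otm_answer M, set_nth tape0 c.2 1 (encode (phi (contents (nth tape0 c.2 1).1))))
  else
    let (q', acts) := otm_delta (c.1) (map read c.2) in
    (q', mkseq (fun i => do_action (nth (None, MoveS) acts i) (nth tape0 c.2 i))
               (size c.2)).

Definition output (M : OTM) (c : config M) : str := contents (nth tape0 c.2 2).1.

(** Since halting configurations are fixed by [step], "M^phi halts on a
    within t steps" is "the configuration after t steps is halting". *)
Definition run (M : OTM) (phi : str -> str) (a : str) (t : nat) : config M :=
  iter t (step phi) (init M a).

Definition computes_in_time (A : (str -> str) -> Prop)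
    (F : (str -> str) -> str -> str) (M : OTM) (P : sopoly) : Prop :=
  forall phi, A phi -> forall a : str,
    let c := run M phi a (sopoly_eval P (size_fun phi) (size a)) in
    c.1 = otm_halt M /\ output c = F phi a.

Definition restricted_polytime (A : (str -> str) -> Prop)
    (F : (str -> str) -> str -> str) : Prop :=
  exists (M : OTM) (P : sopoly), computes_in_time A F M P.

Definition polytime (F : (str -> str) -> str -> str) : Prop :=
  restricted_polytime (fun _ => True) F.

(* Main.v *)
Require Import Defs.
From HB Require Import structures.
From mathcomp Require Import all_boot zify.
From Stdlib Require Import FunctionalExtensionality.
Set Implicit Arguments. Unset Strict Implicit. Unset Printing Implicit Defensive.


Definition tm (t : tape) (f : nat -> sym) (h : nat) :=
  t.2 = h /\ forall i, nth None t.1 i = f i.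
Definition upd (f : nat -> sym) (h : nat) (s : sym) : nat -> sym :=
  fun i => if i == h then s else f i.
Definition mv (d : move) (h : nat) : nat :=
  match d with MoveL => h.-1 | MoveS => h | MoveR => h.+1 end.

Lemma tm_do t f h a : tm t f h -> tm (do_action a t) (upd f h a.1) (mv a.2 h).
Proof.
rewrite /tm => -[Hh Hf]; case: a => s d; rewrite /do_action /=.
have E: forall i, nth None (set_nth None t.1 t.2 s) i = upd f h s i.
  by move=> i; rewrite nth_set_nth /= /upd Hh Hf.
by case: d; split => //=; rewrite Hh.
Qed.

Lemma tm_read t f h : tm t f h -> read t = f h.
Proof. by rewrite /tm => -[Hh Hf]; rewrite /read Hf Hh. Qed.

Lemma upd_same f h : upd f h (f h) = f.
Proof. apply: functional_extensionality => i; rewrite /upd; by case: eqP => // ->. Qed.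

Lemma contents_ext s s' : (forall i, nth None s i = nth None s' i) -> contents s = contents s'.
Proof.
elim: s s' => [|x s IH] [|y s'] E /=.
- by [].
- by move: (E 0) => /= <-.
- by move: (E 0) => /= ->.
- move: (E 0) => /= E0; subst y.
  have E' : forall i, nth None s i = nth None s' i by move=> i; exact: (E i.+1).
  by case: x {E} => // b; rewrite (IH s').
Qed.

Lemma contents_nseq s x :
  (forall i, nth None s i = if i < x then Some false else None) -> contents s = nseq x false.
Proof.
elim: x s => [|x IH] [|y s] E /=.
- by [].
- by move: (E 0) => /= ->.
- by move: (E 0).
- move: (E 0) => /= E0; subst y.
  by rewrite (IH s) // => i; have := E i.+1.
Qed.

Lemma tm_tape0 : tm tape0 (fun _ => None) 0.
Proof. by split => // -[|i]. Qed.

Lemma tm_encode w : tm (encode w) (nth None (map Some w)) 0.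
Proof. by []. Qed.

Lemma nth_map_read ts i : nth None (map read ts) i = read (nth tape0 ts i).
Proof.
case: (ltnP i (size ts)) => H; first by rewrite (nth_map tape0).
by rewrite !nth_default ?size_map.
Qed.

Definition ctrf (i : nat) : sym := if i == 0 then Some true else None.
Definition ctr t v := tm t ctrf v.

Lemma ctr_read t v : ctr t v -> (read t == Some true) = (v == 0).
Proof. by move=> H; rewrite (tm_read H) /ctrf; case: (v) {H}. Qed.

Lemma halted_fix (M : OTM) phi (c : config M) t :
  c.1 = otm_halt M -> iter t (step phi) c = c.
Proof.
move=> H; elim: t => //= t ->; by rewrite /step H eqxx.
Qed.

Lemma iter_halt (M : OTM) phi (c : config M) t d :
  (iter t (step phi) c).1 = otm_halt M -> iter (d + t) (step phi) c = iter t (step phi) c.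
Proof. by move=> H; rewrite iterD halted_fix. Qed.


Inductive ctl := Start | Scan | Inc1 | Inc2 | Ret | Test | B1 | B1r | Qry | Ans
  | B3 | B4 | B4a | B4b | Sq0 | SqOut | SqIn1 | SqIn2 | SqClr | DecJ.
Definition c2n (c : ctl) : nat :=
  match c with Start => 0 | Scan => 1 | Inc1 => 2 | Inc2 => 3 | Ret => 4 | Test => 5
  | B1 => 6 | B1r => 7 | Qry => 8 | Ans => 9 | B3 => 10 | B4 => 11 | B4a => 12
  | B4b => 13 | Sq0 => 14 | SqOut => 15 | SqIn1 => 16 | SqIn2 => 17 | SqClr => 18
  | DecJ => 19 end.
Definition n2c (n : nat) : ctl :=
  match n with 0 => Start | 1 => Scan | 2 => Inc1 | 3 => Inc2 | 4 => Ret | 5 => Test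
  | 6 => B1 | 7 => B1r | 8 => Qry | 9 => Ans | 10 => B3 | 11 => B4 | 12 => B4a
  | 13 => B4b | 14 => Sq0 | 15 => SqOut | 16 => SqIn1 | 17 => SqIn2 | 18 => SqClr
  | _ => DecJ end.
Lemma c2n_lt c : c2n c < 20. Proof. by case: c. Qed.
Definition c2o (c : ctl) : 'I_20 := Ordinal (c2n_lt c).
Definition o2c (o : 'I_20) : ctl := n2c (val o).
Lemma c2oK : cancel c2o o2c. Proof. by case. Qed.
HB.instance Definition _ := Equality.copy ctl (can_type c2oK).
HB.instance Definition _ := Finite.copy ctl (can_type c2oK).

Inductive cop := CInc | CDec | CStay | CInit.
Definition copa (o : cop) (r : sym) : action :=
  match o with CInc => (r, MoveR) | CDec => (r, MoveL) | CStay => (r, MoveS)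
  | CInit => (Some true, MoveS) end.
Definition cev (o : cop) (v : nat) : nat :=
  match o with CInc => v.+1 | CDec => v.-1 | CStay => v | CInit => 0 end.
Definition wb (d : move) : sym -> action := fun r => (r, d).
Definition iz (r : sym) : bool := r == Some true.

Section Machine.
Variable M : OTM.
Variable K : nat.
Notation m := (ntapes M).
Definition Xi := m. Definition Yi := m.+1. Definition Zi := m.+2.
Definition Ci := m.+3. Definition Ji := m.+4.

Definition cs := ('I_K.+1 + ctl)%type.
Definition Q' := (otm_Q M + cs)%type.
Definition QC (c : ctl) : Q' := inr (inr c).

Record cres := CR { cq : Q'; ca0 : sym -> action; ca1 : sym -> action;
  cox : cop; coy : cop; coz : cop; coc : cop; coj : cop }.
Definition NR (q : Q') := CR q (wb MoveS) (wb MoveS) CStay CStay CStay CStay CStay.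
Definition ws := wb MoveS.

Definition cstep (s : cs) (r0 r1 : sym) (zx zy zz zc zj : bool) : cres :=
  match s with
  | inl j => if val j is j'.+1 then CR (inr (inl (inord j'))) ws ws CStay CStay CStay CStay CInc
             else NR (QC Scan)
  | inr c => match c with
    | Start => CR (inr (inl ord_max)) ws ws CInit CInit CInit CInit CInit
    | Scan => if r0 is Some _ then CR (QC Scan) (wb MoveR) ws CInc CInc CStay CStay CStay
              else NR (QC Inc1)
    | Inc1 => CR (QC Inc2) ws ws CInc CStay CStay CStay CStay
    | Inc2 => CR (QC Ret) ws ws CInc CStay CStay CStay CStay
    | Ret => if zy then NR (QC Test) else CR (QC Ret) (wb MoveL) ws CStay CDec CStay CStay CStay
    | Test => if zj then NR (inl (otm_start M)) else NR (QC B1)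
    | B1 => if zx then NR (QC B1r)
            else CR (QC B1) ws (fun _ => (Some false, MoveR)) CDec CInc CStay CStay CStay
    | B1r => if zy then NR (QC Qry) else CR (QC B1r) ws ws CInc CDec CStay CStay CStay
    | Qry => NR (QC Ans)
    | Ans => if zj then NR (inl (otm_answer M)) else NR (QC B3)
    | B3 => if r1 is Some _ then CR (QC B3) ws (fun _ => (None, MoveR)) CStay CInc CStay CStay CStay
            else NR (QC B4)
    | B4 => if zy then NR (QC B4a) else CR (QC B4) ws (wb MoveL) CInc CDec CStay CStay CStay
    | B4a => CR (QC B4b) ws ws CInc CStay CStay CStay CStay
    | B4b => CR (QC Sq0) ws ws CInc CStay CStay CStay CStay
    | Sq0 => if zx then NR (QC SqOut) else CR (QC Sq0) ws ws CDec CInc CInc CStay CStay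
    | SqOut => if zz then NR (QC SqClr) else CR (QC SqIn1) ws ws CStay CStay CDec CStay CStay
    | SqIn1 => if zy then NR (QC SqIn2) else CR (QC SqIn1) ws ws CInc CDec CStay CInc CStay
    | SqIn2 => if zc then NR (QC SqOut) else CR (QC SqIn2) ws ws CStay CInc CStay CDec CStay
    | SqClr => if zy then NR (QC DecJ) else CR (QC SqClr) ws ws CStay CDec CStay CStay CStay
    | DecJ => CR (QC Test) ws ws CStay CStay CStay CStay CDec
    end
  end.

Definition mkf (R : cres) (rs : seq sym) (i : nat) : action :=
  if i == 0 then ca0 R (nth None rs 0)
  else if i == 1 then ca1 R (nth None rs 1)
  else if i == Xi then copa (cox R) (nth None rs i)
  else if i == Yi then copa (coy R) (nth None rs i)
  else if i == Zi then copa (coz R) (nth None rs i)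
  else if i == Ci then copa (coc R) (nth None rs i)
  else if i == Ji then copa (coj R) (nth None rs i)
  else (nth None rs i, MoveS).

Definition simf (acts : seq action) (rs : seq sym) (i : nat) : action :=
  if i < m then nth (None, MoveS) acts i
  else if i == Xi then (nth None rs i, MoveL) else (nth None rs i, MoveS).

Definition dl (q : Q') (rs : seq sym) : Q' * seq action :=
  match q with
  | inl qm =>
    if iz (nth None rs Xi) then (inl (otm_halt M), mkseq (mkf (NR (QC Qry)) rs) (m + 5))
    else if qm == otm_query M then
      (QC Qry, mkseq (mkf (CR (QC Qry) ws ws CDec CStay CStay CStay CStay) rs) (m + 5))
    else let (q2, acts) := otm_delta qm (take m rs) in
      (inl q2, mkseq (simf acts rs) (m + 5))
  | inr s =>
    let R := cstep s (nth None rs 0) (nth None rs 1) (iz (nth None rs Xi))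
               (iz (nth None rs Yi)) (iz (nth None rs Zi)) (iz (nth None rs Ci))
               (iz (nth None rs Ji)) in
    (cq R, mkseq (mkf R rs) (m + 5))
  end.

Definition M' : OTM := {| otm_Q := Q'; otm_k := otm_k M + 5; otm_start := QC Start;
  otm_halt := inl (otm_halt M); otm_query := QC Qry; otm_answer := QC Ans;
  otm_delta := dl |}.

Lemma ntapesM' : ntapes M' = m + 5.
Proof. by rewrite /ntapes /=; lia. Qed.

Lemma nth_mkseq_do (f : nat -> action) (ts : seq tape) n i :
  i < n ->
  nth tape0 (mkseq (fun j => do_action (nth (None, MoveS) (mkseq f n) j) (nth tape0 ts j)) n) i
  = do_action (f i) (nth tape0 ts i).
Proof. by move=> H; rewrite nth_mkseq // nth_mkseq. Qed.

Lemma step_gen phi (q : Q') ts :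
  q != inl (otm_halt M) -> q != QC Qry ->
  step (M := M') phi (q, ts) =
  ((dl q (map read ts)).1,
   mkseq (fun i => do_action (nth (None, MoveS) (dl q (map read ts)).2 i) (nth tape0 ts i)) (size ts)).
Proof.
move=> H1 H2; rewrite /step /= (negbTE H1) (negbTE H2).
by case: (dl q (map read ts)).
Qed.

Lemma mkf0 R rs : mkf R rs 0 = ca0 R (nth None rs 0). Proof. by []. Qed.
Lemma mkf1 R rs : mkf R rs 1 = ca1 R (nth None rs 1). Proof. by []. Qed.
Ltac mkf_tac := rewrite /mkf /Xi /Yi /Zi /Ci /Ji /ntapes; do ![case: eqP => //; try lia].
Lemma mkfX R rs : mkf R rs Xi = copa (cox R) (nth None rs Xi). Proof. mkf_tac. Qed.
Lemma mkfY R rs : mkf R rs Yi = copa (coy R) (nth None rs Yi). Proof. mkf_tac. Qed.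
Lemma mkfZ R rs : mkf R rs Zi = copa (coz R) (nth None rs Zi). Proof. mkf_tac. Qed.
Lemma mkfC R rs : mkf R rs Ci = copa (coc R) (nth None rs Ci). Proof. mkf_tac. Qed.
Lemma mkfJ R rs : mkf R rs Ji = copa (coj R) (nth None rs Ji). Proof. mkf_tac. Qed.
Lemma mkfM R rs i : 1 < i < m -> mkf R rs i = (nth None rs i, MoveS).
Proof. move=> /andP[H1 H2]; rewrite /ntapes in H2; mkf_tac. Qed.

Lemma ctr_copa t v o : ctr t v -> o <> CInit -> ctr (do_action (copa o (read t)) t) (cev o v).
Proof.
move=> H Ho; have := tm_do (copa o (read t)) H.
rewrite (tm_read H); case: o Ho => //= _; by rewrite upd_same.
Qed.

Lemma tm_neutral t : tm t (fun _ => None) 0 -> tm (do_action (read t, MoveS) t) (fun _ => None) 0.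
Proof. move=> H; have := tm_do (read t, MoveS) H; by rewrite (tm_read H) upd_same. Qed.

Record acfg := AC { aq : Q'; fin : nat -> sym; hin : nat; fq : nat -> sym; hq : nat;
  ax : nat; ay : nat; az : nat; ac : nat; aj : nat }.

Definition Rel (c : config M') (A : acfg) :=
  [/\ c.1 = aq A, size c.2 = m + 5, tm (nth tape0 c.2 0) (fin A) (hin A),
      tm (nth tape0 c.2 1) (fq A) (hq A) &
      (forall i, 1 < i < m -> tm (nth tape0 c.2 i) (fun _ => None) 0)] /\
      [/\ ctr (nth tape0 c.2 Xi) (ax A), ctr (nth tape0 c.2 Yi) (ay A),
          ctr (nth tape0 c.2 Zi) (az A), ctr (nth tape0 c.2 Ci) (ac A) &
          ctr (nth tape0 c.2 Ji) (aj A)].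

Definition aupd (R : cres) (A : acfg) : acfg :=
  let a0 := ca0 R (fin A (hin A)) in let a1 := ca1 R (fq A (hq A)) in
  AC (cq R) (upd (fin A) (hin A) a0.1) (mv a0.2 (hin A)) (upd (fq A) (hq A) a1.1)
     (mv a1.2 (hq A)) (cev (cox R) (ax A)) (cev (coy R) (ay A)) (cev (coz R) (az A))
     (cev (coc R) (ac A)) (cev (coj R) (aj A)).

Lemma cstep_noinit s r0 r1 zx zy zz zc zj : s != inr Start ->
  let R := cstep s r0 r1 zx zy zz zc zj in
  [/\ cox R <> CInit, coy R <> CInit, coz R <> CInit, coc R <> CInit & coj R <> CInit].
Proof.
case: s => [j|c] /=.
  by case: (val j).
case: c => //= _; repeat (case: ifP => //); try (case: r0 => //); try (case: r1 => //).
Qed.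

Lemma Rel_step phi c A s :
  Rel c A -> aq A = inr s -> s != inr Qry -> s != inr Start ->
  Rel (step (M := M') phi c)
      (aupd (cstep s (fin A (hin A)) (fq A (hq A)) (ax A == 0) (ay A == 0) (az A == 0)
                   (ac A == 0) (aj A == 0)) A).
Proof.
case: c => q ts [[/= Hq Hs H0 H1 HM] [HX HY HZ HC HJ]] HA Hs1 Hs2.
subst q; rewrite HA step_gen //.
rewrite /dl /= !nth_map_read (tm_read H0) (tm_read H1) /iz (ctr_read HX) (ctr_read HY)
  (ctr_read HZ) (ctr_read HC) (ctr_read HJ).
set R := cstep _ _ _ _ _ _ _ _.
have [NX NY NZ NC NJ] := cstep_noinit (fin A (hin A)) (fq A (hq A)) (ax A == 0)
  (ay A == 0) (az A == 0) (ac A == 0) (aj A == 0) Hs2.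
have E : forall i, i < m + 5 -> nth tape0 (mkseq (fun i => do_action (nth (None, MoveS)
   (mkseq (mkf R (map read ts)) (m + 5)) i) (nth tape0 ts i)) (size ts)) i =
   do_action (mkf R (map read ts) i) (nth tape0 ts i).
  by move=> i Hi; rewrite Hs nth_mkseq_do.
have LX : Xi < m + 5 by rewrite /Xi; lia.
have LY : Yi < m + 5 by rewrite /Yi; lia.
have LZ : Zi < m + 5 by rewrite /Zi; lia.
have LC : Ci < m + 5 by rewrite /Ci; lia.
have LJ : Ji < m + 5 by rewrite /Ji; lia.
split; split => /=.
- by [].
- by rewrite size_mkseq.
- by rewrite E ?addn5 // mkf0 nth_map_read (tm_read H0); apply: tm_do.
- by rewrite E ?addn5 // mkf1 nth_map_read (tm_read H1); apply: tm_do.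
- move=> i Hi; rewrite E; last by case/andP: Hi => _; lia.
  by rewrite mkfM // nth_map_read; apply: tm_neutral; apply: HM.
  + by rewrite E // mkfX nth_map_read; apply: ctr_copa.
  + by rewrite E // mkfY nth_map_read; apply: ctr_copa.
  + by rewrite E // mkfZ nth_map_read; apply: ctr_copa.
  + by rewrite E // mkfC nth_map_read; apply: ctr_copa.
  + by rewrite E // mkfJ nth_map_read; apply: ctr_copa.
Qed.

Lemma Rel_next phi c A s B :
  Rel c A -> aq A = inr s -> s != inr Qry -> s != inr Start ->
  aupd (cstep s (fin A (hin A)) (fq A (hq A)) (ax A == 0) (ay A == 0) (az A == 0)
                   (ac A == 0) (aj A == 0)) A = B ->
  Rel (step (M := M') phi c) B.
Proof. by move=> H1 H2 H3 H4 <-; apply: Rel_step. Qed.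


Ltac astep H := apply: (Rel_next _ H); [by [] | by [] | by [] | rewrite /aupd /= ?upd_same ].

Section Loops.
Variable phi : str -> str.
Notation stp := (step (M := M') phi).
Notation none := (fun _ : nat => None).

Lemma scan_loop d (fi : nat -> sym) fq0 hq0 z cc j : forall h x y c,
  (forall i, i < d -> fi (h + i) <> None) ->
  Rel c (AC (QC Scan) fi h fq0 hq0 x y z cc j) ->
  Rel (iter d stp c) (AC (QC Scan) fi (h + d) fq0 hq0 (x + d) (y + d) z cc j).
Proof.
elim: d => [|d IH] h x y c Hf H; first by rewrite !addn0.
rewrite iterSr.
have : Rel (stp c) (AC (QC Scan) fi h.+1 fq0 hq0 x.+1 y.+1 z cc j).
  astep H.
  have := Hf 0 isT; rewrite addn0.
  case E: (fi h) => [b|] // _ /=.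
  by rewrite -E !upd_same.
move=> H'; have := IH h.+1 x.+1 y.+1 _ _ H'; rewrite !addSnnS; apply.
by move=> i Hi; rewrite addSnnS; apply: Hf.
Qed.

Lemma ret_loop fi fq0 hq0 x z cc j : forall d h c,
  Rel c (AC (QC Ret) fi h fq0 hq0 x d z cc j) ->
  Rel (iter d.+1 stp c) (AC (QC Test) fi (h - d) fq0 hq0 x 0 z cc j).
Proof.
elim => [|d IH] h c H.
  by rewrite subn0 /=; astep H.
rewrite iterSr; have ->: h - d.+1 = h.-1 - d by lia.
by apply: IH; astep H.
Qed.

Lemma b1_loop fi hi z cc j : forall d x y c,
  Rel c (AC (QC B1) fi hi (fun i => if i < y then Some false else None) y d x z cc j) ->
  Rel (iter d.+1 stp c)
      (AC (QC B1r) fi hi (fun i => if i < y + d then Some false else None) (y + d) 0 (x + d) z cc j).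
Proof.
elim => [|d IH] x y c H.
  by rewrite !addn0 /=; astep H.
rewrite iterSr !addnS -!addSn; apply: IH; astep H.
congr AC; apply: functional_extensionality => i; rewrite /upd ltnS.
by case: ltngtP.
Qed.

Lemma b1r_loop fi hi fq0 hq0 z cc j : forall d x c,
  Rel c (AC (QC B1r) fi hi fq0 hq0 x d z cc j) ->
  Rel (iter d.+1 stp c) (AC (QC Qry) fi hi fq0 hq0 (x + d) 0 z cc j).
Proof.
elim => [|d IH] x c H.
  by rewrite !addn0 /=; astep H.
by rewrite iterSr addnS -addSn; apply: IH; astep H.
Qed.

Lemma b3_loop fi hi (w : seq sym) x z cc j : forall d h y c,
  h + d = size w -> (forall i, i < size w -> nth None w i <> None) ->
  Rel c (AC (QC B3) fi hi (fun i => if i < h then None else nth None w i) h x y z cc j) ->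
  Rel (iter d stp c)
      (AC (QC B3) fi hi (fun i => if i < h + d then None else nth None w i) (h + d) x (y + d) z cc j).
Proof.
elim => [|d IH] h y c Hd Hw H.
  by rewrite !addn0.
rewrite iterSr !addnS -!addSn; apply: IH => //; first by rewrite addSn -addnS.
astep H.
have: nth None w h <> None by apply: Hw; lia.
rewrite ltnn.
case E: (nth None w h) => [b|] // _ /=.
rewrite upd_same; congr AC; apply: functional_extensionality => i; rewrite /upd ltnS.
by case: ltngtP.
Qed.

Lemma b3_exit fi hi (w : seq sym) x y z cc j c :
  Rel c (AC (QC B3) fi hi (fun i => if i < size w then None else nth None w i) (size w) x y z cc j) ->
  Rel (stp c) (AC (QC B4) fi hi (fun _ => None) (size w) x y z cc j).
Proof.
move=> H; astep H; rewrite ltnn nth_default //= upd_same.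
congr AC; apply: functional_extensionality => i; rewrite /upd.
case: eqP => // _.
by case: ltnP => // Hi; rewrite nth_default.
Qed.

Lemma b4_loop fi hi z cc j : forall d h x c,
  Rel c (AC (QC B4) fi hi (fun _ => None) h x d z cc j) ->
  Rel (iter d.+1 stp c) (AC (QC B4a) fi hi (fun _ => None) (h - d) (x + d) 0 z cc j).
Proof.
elim => [|d IH] h x c H.
  by rewrite subn0 addn0 /=; astep H.
rewrite iterSr; have ->: h - d.+1 = h.-1 - d by lia.
by rewrite addnS -addSn; apply: IH; astep H.
Qed.

Lemma sq0_loop fi hi fq0 hq0 cc j : forall d y z c,
  Rel c (AC (QC Sq0) fi hi fq0 hq0 d y z cc j) ->
  Rel (iter d.+1 stp c) (AC (QC SqOut) fi hi fq0 hq0 0 (y + d) (z + d) cc j).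
Proof.
elim => [|d IH] y z c H.
  by rewrite !addn0 /=; astep H.
by rewrite iterSr !addnS -!addSn; apply: IH; astep H.
Qed.

Lemma sqin1_loop fi hi fq0 hq0 z j : forall d x cc c,
  Rel c (AC (QC SqIn1) fi hi fq0 hq0 x d z cc j) ->
  Rel (iter d.+1 stp c) (AC (QC SqIn2) fi hi fq0 hq0 (x + d) 0 z (cc + d) j).
Proof.
elim => [|d IH] x cc c H.
  by rewrite !addn0 /=; astep H.
by rewrite iterSr !addnS -!addSn; apply: IH; astep H.
Qed.

Lemma sqin2_loop fi hi fq0 hq0 x z j : forall d y c,
  Rel c (AC (QC SqIn2) fi hi fq0 hq0 x y z d j) ->
  Rel (iter d.+1 stp c) (AC (QC SqOut) fi hi fq0 hq0 x (y + d) z 0 j).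
Proof.
elim => [|d IH] y c H.
  by rewrite !addn0 /=; astep H.
by rewrite iterSr !addnS -!addSn; apply: IH; astep H.
Qed.

Lemma sqout_loop fi hi fq0 hq0 s j : forall d x c,
  Rel c (AC (QC SqOut) fi hi fq0 hq0 x s d 0 j) ->
  Rel (iter (d * (2 * s + 3)) stp c) (AC (QC SqOut) fi hi fq0 hq0 (x + d * s) s 0 0 j).
Proof.
elim => [|d IH] x c H.
  by rewrite !mul0n addn0.
have E : d.+1 * (2 * s + 3) = d * (2 * s + 3) + (s.+1 + s.+1 + 1) by lia.
rewrite E !iterD.
have H1 : Rel (stp c) (AC (QC SqIn1) fi hi fq0 hq0 x s d 0 j) by astep H.
have H2 := sqin1_loop H1.
have H3 := sqin2_loop H2.
rewrite !add0n in H3.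
have -> : x + d.+1 * s = (x + s) + d * s by lia.
by apply: IH.
Qed.

Lemma sqclr_loop fi hi fq0 hq0 x z cc j : forall d c,
  Rel c (AC (QC SqClr) fi hi fq0 hq0 x d z cc j) ->
  Rel (iter d.+1 stp c) (AC (QC DecJ) fi hi fq0 hq0 x 0 z cc j).
Proof.
elim => [|d IH] c H.
  by rewrite /=; astep H.
by rewrite iterSr; apply: IH; astep H.
Qed.

Lemma Rel_qry fi hi x hq0 X Y Z C J c :
  Rel c (AC (QC Qry) fi hi (fun i => if i < x then Some false else None) hq0 X Y Z C J) ->
  Rel (stp c) (AC (QC Ans) fi hi (nth None (map Some (phi (nseq x false)))) 0 X Y Z C J).
Proof.
case: c => q ts [[/= Hq Hs H0 H1 HM] [HX HY HZ HC HJ]]; subst q.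
rewrite /step /=.
case: H1 => _ H1'; rewrite (contents_nseq H1').
have N : forall i, i != 1 -> nth tape0 (set_nth tape0 ts 1 (encode (phi (nseq x false)))) i
   = nth tape0 ts i.
  by move=> i Hi; rewrite nth_set_nth /= (negbTE Hi).
have NX : Xi != 1 by rewrite /Xi.
have NY : Yi != 1 by rewrite /Yi.
have NZ : Zi != 1 by rewrite /Zi.
have NC : Ci != 1 by rewrite /Ci.
have NJ : Ji != 1 by rewrite /Ji.
split; split => /=.
- by [].
- by rewrite size_set_nth Hs; apply/maxn_idPr; lia.
- by rewrite N.
- by rewrite nth_set_nth.
- move=> i Hi; rewrite N; first exact: HM.
  by apply/eqP => E; rewrite E in Hi.
- by rewrite N.
- by rewrite N.
- by rewrite N.
- by rewrite N.
- by rewrite N.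
Qed.

Lemma Rel_chain t1 t2 c B C :
  Rel (iter t1 stp c) B -> (forall c', Rel c' B -> Rel (iter t2 stp c') C) ->
  Rel (iter (t2 + t1) stp c) C.
Proof. by move=> H1 H2; rewrite iterD; apply: H2. Qed.

Definition Lq x := size (phi (nseq x false)).
Definition sq x := x + Lq x + 2.
Definition gq x := sq x * sq x.

Lemma test_go fi hi x j c :
  Rel c (AC (QC Test) fi hi (fun _ => None) 0 x 0 0 0 j.+1) ->
  Rel (stp c) (AC (QC B1) fi hi (fun i => if i < 0 then Some false else None) 0 x 0 0 0 j.+1).
Proof. by move=> H; astep H. Qed.

Lemma ans_go fi hi f x j c :
  Rel c (AC (QC Ans) fi hi f 0 x 0 0 0 j.+1) ->
  Rel (stp c) (AC (QC B3) fi hi (fun i => if i < 0 then None else f i) 0 x 0 0 0 j.+1).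
Proof. by move=> H; astep H. Qed.

Lemma b4a_go fi hi f h x y z cc j c :
  Rel c (AC (QC B4a) fi hi f h x y z cc j) ->
  Rel (stp c) (AC (QC B4b) fi hi f h x.+1 y z cc j).
Proof. by move=> H; astep H. Qed.

Lemma b4b_go fi hi f h x y z cc j c :
  Rel c (AC (QC B4b) fi hi f h x y z cc j) ->
  Rel (stp c) (AC (QC Sq0) fi hi f h x.+1 y z cc j).
Proof. by move=> H; astep H. Qed.

Lemma sqout_exit fi hi f h x y cc j c :
  Rel c (AC (QC SqOut) fi hi f h x y 0 cc j) ->
  Rel (stp c) (AC (QC SqClr) fi hi f h x y 0 cc j).
Proof. by move=> H; astep H. Qed.

Lemma decj_go fi hi f h x y z cc j c :
  Rel c (AC (QC DecJ) fi hi f h x y z cc j) ->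
  Rel (stp c) (AC (QC Test) fi hi f h x y z cc j.-1).
Proof. by move=> H; astep H. Qed.

Ltac norm H := rewrite -?iterS -?iterD in H; cbn [fin hin fq hq ax ay az ac aj aq] in H;
  rewrite ?add0n ?subnn in H.

Lemma iteration fi hi x j c :
  Rel c (AC (QC Test) fi hi (fun _ => None) 0 x 0 0 0 j.+1) ->
  exists t, t <= 9 * gq x /\
    Rel (iter t stp c) (AC (QC Test) fi hi (fun _ => None) 0 (gq x) 0 0 0 j).
Proof.
move=> H0; have {H0} H0 : Rel (iter 0 stp c) _ := H0.
have H1 := test_go H0; norm H1.
have H2 := b1_loop H1; norm H2.
have H3 := b1r_loop H2; norm H3.
have H4 := Rel_qry H3; norm H4.
have H5 := ans_go H4; norm H5.
have Hw : forall i, i < size (map Some (phi (nseq x false))) ->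
    nth None (map Some (phi (nseq x false))) i <> None.
  by move=> i Hi; rewrite (nth_map false) // -(size_map Some).
have H6 := b3_loop (w := map Some (phi (nseq x false))) (h := 0) (add0n _) Hw H5.
rewrite !add0n -iterD in H6.
have H7 := b3_exit H6; norm H7.
have H8 := b4_loop H7; norm H8.
have H9 := b4a_go H8; norm H9.
have H10 := b4b_go H9; norm H10.
have H11 := sq0_loop H10; norm H11.
have H12 := sqout_loop H11; norm H12.
have H13 := sqout_exit H12; norm H13.
have H14 := sqclr_loop H13; norm H14.
have H15 := decj_go H14; norm H15.
rewrite size_map in H15.
eexists; split; last first.
  suff -> : gq x = (x + size (phi (nseq x false))).+2 * (x + size (phi (nseq x false))).+2
    by exact: H15.
  by rewrite /gq /sq /Lq; lia.
rewrite /gq /sq /Lq; nia.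
Qed.

Definition teq (t u : tape) := t.2 = u.2 /\ forall i, nth None t.1 i = nth None u.1 i.

Lemma teq_refl t : teq t t. Proof. by []. Qed.
Lemma teq_trans t u w : teq t u -> teq u w -> teq t w.
Proof. by case=> H1 H2 [H3 H4]; split; [rewrite H1 | move=> i; rewrite H2]. Qed.
Lemma teq_read t u : teq t u -> read t = read u.
Proof. by case=> H1 H2; rewrite /read H1 H2. Qed.
Lemma teq_do a t u : teq t u -> teq (do_action a t) (do_action a u).
Proof.
case=> H1 H2; case: a => s d; rewrite /do_action /=.
have E : forall i, nth None (set_nth None t.1 t.2 s) i = nth None (set_nth None u.1 u.2 s) i.
  by move=> i; rewrite !nth_set_nth /= H1 H2.
by case: d; split => //=; rewrite H1.
Qed.
Lemma teq_wb t : teq (do_action (read t, MoveS) t) t.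
Proof.
split => //= i; rewrite nth_set_nth /=; case: eqP => // ->; by [].
Qed.
Lemma teq_contents t u : teq t u -> contents t.1 = contents u.1.
Proof. by case=> _ H; apply: contents_ext. Qed.

Definition SimRel (cM : config M) (c : config M') (v : nat) :=
  [/\ c.1 = inl cM.1, size cM.2 = m, size c.2 = m + 5,
      (forall i, i < m -> teq (nth tape0 c.2 i) (nth tape0 cM.2 i)) &
      ctr (nth tape0 c.2 Xi) v /\ ctr (nth tape0 c.2 Ji) 0].

Definition SimOK (c : config M') (v : nat) :=
  [/\ exists q, c.1 = inl q, size c.2 = m + 5, ctr (nth tape0 c.2 Xi) v & ctr (nth tape0 c.2 Ji) 0].

Lemma mkf_low R rs i : ca0 R = ws -> ca1 R = ws -> i < m -> mkf R rs i = (nth None rs i, MoveS).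
Proof.
move=> H0 H1 Hi; case: i Hi => [|[|i]] Hi.
- by rewrite mkf0 H0.
- by rewrite mkf1 H1.
- by rewrite mkfM.
Qed.

Lemma simfX acts rs : simf acts rs Xi = (nth None rs Xi, MoveL).
Proof. by rewrite /simf /Xi ltnn eqxx. Qed.
Lemma simfJ acts rs : simf acts rs Ji = (nth None rs Ji, MoveS).
Proof. rewrite /simf /Ji /Xi; case: ltnP => [|_]; first lia. by case: eqP => //; lia. Qed.
Lemma simf_low acts rs i : i < m -> simf acts rs i = nth (None, MoveS) acts i.
Proof. by rewrite /simf => ->. Qed.

Lemma XJ_lt : Xi < m + 5 /\ Ji < m + 5. Proof. by rewrite /Xi /Ji; split; lia. Qed.

Lemma step_inl q ts : q != otm_halt M -> size ts = m + 5 ->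
  stp (inl q, ts) =
  ((dl (inl q) (map read ts)).1,
   mkseq (fun i => do_action (nth (None, MoveS) (dl (inl q) (map read ts)).2 i) (nth tape0 ts i)) (m + 5)).
Proof.
move=> Hq Hs; rewrite step_gen ?Hs //.
Qed.

Lemma take_reads ts ts2 : size ts = m -> size ts2 = m + 5 ->
  (forall i, i < m -> teq (nth tape0 ts2 i) (nth tape0 ts i)) ->
  take m (map read ts2) = map read ts.
Proof.
move=> H1 H2 H; apply: (@eq_from_nth _ None).
  by rewrite size_takel ?size_map ?H1 ?H2 //; lia.
move=> i; rewrite size_takel ?size_map ?H2; last lia.
move=> Hi; rewrite nth_take // !nth_map_read; apply: teq_read; exact: H.
Qed.

Lemma nth_set_nth_ne (T : Type) (x0 : T) s n y i : i != n -> nth x0 (set_nth x0 s n y) i = nth x0 s i.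
Proof. by move=> H; rewrite nth_set_nth /= (negbTE H). Qed.

Lemma ctrXJ_ne1 : Xi != 1 /\ Ji != 1. Proof. by rewrite /Xi /Ji. Qed.
Lemma XJ_ge : ~~ (Xi < m) /\ ~~ (Ji < m). Proof. rewrite /Xi /Ji; split; apply/negP; lia. Qed.

Lemma sim_zero cM c : SimRel cM c 0 -> cM.1 != otm_halt M ->
  (stp c).1 = inl (otm_halt M).
Proof.
case: cM c => q ts [q2 ts2] [/= -> Hs Hs2 HT [HX HJ]] Hq.
by rewrite step_inl //= nth_map_read /iz (ctr_read HX).
Qed.

Lemma sim_step cM c v : SimRel cM c v.+1 -> cM.1 != otm_halt M ->
  exists t, t <= 3 /\ SimRel (step phi cM) (iter t stp c) v.
Proof.
case: cM c => q ts [q2 ts2] [/= -> Hs Hs2 HT [HX HJ]] Hq.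
have [LX LJ] := XJ_lt.
have [NX NJ] := ctrXJ_ne1.
have [GX GJ] := XJ_ge.
have HX0 : iz (nth None (map read ts2) Xi) = false by rewrite nth_map_read /iz (ctr_read HX).
case Hqq: (q == otm_query M).
-
  exists 3; split => //.
  set ts3 := mkseq (fun i => do_action (nth (None, MoveS)
      (mkseq (mkf (CR (QC Qry) ws ws CDec CStay CStay CStay CStay) (map read ts2)) (m + 5)) i)
      (nth tape0 ts2 i)) (m + 5).
  have E1 : stp (inl q, ts2) = (QC Qry, ts3) by rewrite step_inl //= HX0 Hqq.
  have S3 : size ts3 = m + 5 by rewrite size_mkseq.
  have N3 : forall i, i < m -> teq (nth tape0 ts3 i) (nth tape0 ts i).
    move=> i Hi; rewrite /ts3 nth_mkseq_do; last lia.
    rewrite mkf_low // nth_map_read; apply: teq_trans (teq_wb _) _; exact: HT.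
  set ts4 := set_nth tape0 ts3 1 (encode (phi (contents (nth tape0 ts3 1).1))).
  have E2 : stp (QC Qry, ts3) = (QC Ans, ts4) by rewrite /step.
  have S4 : size ts4 = m + 5 by rewrite size_set_nth S3; apply/maxn_idPr; lia.
  have C4 : contents (nth tape0 ts3 1).1 = contents (nth tape0 ts 1).1.
    by apply: teq_contents; apply: N3.
  have X4 : ctr (nth tape0 ts4 Xi) v.
    rewrite /ts4 nth_set_nth_ne // /ts3 nth_mkseq_do // mkfX nth_map_read.
    by have := ctr_copa (o := CDec) HX; apply.
  have J4 : ctr (nth tape0 ts4 Ji) 0.
    rewrite /ts4 nth_set_nth_ne // /ts3 nth_mkseq_do // mkfJ nth_map_read.
    by have := ctr_copa (o := CStay) HJ; apply.
  set ts5 := mkseq (fun i => do_action (nth (None, MoveS) (dl (QC Ans) (map read ts4)).2 i)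
               (nth tape0 ts4 i)) (size ts4).
  have E3 : stp (QC Ans, ts4) = ((dl (QC Ans) (map read ts4)).1, ts5) by rewrite step_gen.
  have D : dl (QC Ans) (map read ts4) = (inl (otm_answer M), mkseq (mkf (NR (inl (otm_answer M))) (map read ts4)) (m + 5)).
    by rewrite /dl /= nth_map_read /iz (ctr_read J4).
  have EM : step phi (q, ts) = (otm_answer M,
      set_nth tape0 ts 1 (encode (phi (contents (nth tape0 ts 1).1))))
    by rewrite /step /= (negbTE Hq) Hqq.
  rewrite /= E1 E2 E3 EM.
  split.
  + by rewrite D.
  + by rewrite size_set_nth Hs; apply/maxn_idPr.
  + by rewrite /ts5 size_mkseq.
  + move=> i Hi; rewrite /ts5 D S4 nth_mkseq_do; last lia.
    rewrite mkf_low // nth_map_read; apply: teq_trans (teq_wb _) _.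
    cbn [snd]; case: (i =P 1) => [->|/eqP Ni1].
      by rewrite /ts4 !nth_set_nth /= C4.
    by rewrite /ts4 !nth_set_nth_ne //; exact: N3.
  + split.
    * rewrite /ts5 D S4 nth_mkseq_do // mkfX nth_map_read.
      by have := ctr_copa (o := CStay) X4; apply.
    * rewrite /ts5 D S4 nth_mkseq_do // mkfJ nth_map_read.
      by have := ctr_copa (o := CStay) J4; apply.
-
  exists 1; split => //.
  case E: (otm_delta q (map read ts)) => [q' acts].
  have EM : step phi (q, ts) = (q', mkseq (fun i => do_action (nth (None, MoveS) acts i)
      (nth tape0 ts i)) (size ts)) by rewrite /step /= (negbTE Hq) Hqq E.
  have ED : dl (inl q) (map read ts2) = (inl q', mkseq (simf acts (map read ts2)) (m + 5)).
    by rewrite /dl HX0 Hqq (take_reads Hs Hs2 HT) E.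
  rewrite EM; cbn [iter]; rewrite step_inl // ED.
  split.
  + by [].
  + by rewrite size_mkseq.
  + by rewrite size_mkseq.
  + move=> i Hi; cbn [snd]; rewrite nth_mkseq_do; last lia.
    rewrite nth_mkseq ?Hs // simf_low //; apply: teq_do; exact: HT.
  + split.
    * rewrite nth_mkseq_do // simfX nth_map_read.
      by have := ctr_copa (o := CDec) HX; apply.
    * rewrite nth_mkseq_do // simfJ nth_map_read.
      by have := ctr_copa (o := CStay) HJ; apply.
Qed.

Lemma sim_total v : forall cM c, SimRel cM c v ->
  exists t, t <= 3 * v + 1 /\ (iter t stp c).1 = inl (otm_halt M).
Proof.
elim: v => [|v IH] cM c H.
  case Hh: (cM.1 == otm_halt M).
    by exists 0; split => //; case: H => -> *; rewrite (eqP Hh).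
  by exists 1; split => //; apply: (sim_zero H); rewrite Hh.
case Hh: (cM.1 == otm_halt M).
  by exists 0; split => //; case: H => -> *; rewrite (eqP Hh).
have [t1 [Ht1 H1]] := sim_step H (negbT Hh).
have [t2 [Ht2 H2]] := IH _ _ H1.
exists (t2 + t1); split; first lia.
by rewrite iterD.
Qed.

Lemma sim_run cM c v : SimRel cM c v -> forall t, t <= v ->
  exists s v', v - t <= v' /\ SimRel (iter t (step phi) cM) (iter s stp c) v'.
Proof.
move=> H; elim => [|t IH] Ht.
  by exists 0, v; rewrite subn0.
have [s [v' [Hv H1]]] := IH (ltnW Ht).
case Hh: ((iter t (step phi) cM).1 == otm_halt M).
  exists s, v'; split; first lia.
  have -> : iter t.+1 (step phi) cM = iter t (step phi) cM.
    by rewrite iterS; exact: (halted_fix phi 1 (eqP Hh)).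
  exact: H1.
case: v' Hv H1 => [|v'] Hv H1; first lia.
have [t1 [_ H2]] := sim_step H1 (negbT Hh).
exists (t1 + s), v'; split; first lia.
by rewrite iterD iterS.
Qed.

Variable a : str.
Notation fa := (nth None (map Some a)).

Lemma init_nth i : 0 < i -> nth tape0 (init M' a).2 i = tape0.
Proof.
have E : forall n j, nth tape0 (nseq n tape0) j = tape0 by move=> n j; rewrite nth_nseq; case: ifP.
by case: i => // i _; exact: E.
Qed.

Lemma init_size : size (init M' a).2 = m + 5.
Proof. by rewrite /= size_nseq /ntapes; lia. Qed.

Lemma Rel_init :
  Rel (iter 1 stp (init M' a)) (AC (inr (inl ord_max)) fa 0 (fun _ => None) 0 0 0 0 0 0).
Proof.
rewrite /= step_gen // init_size.
have [LX LJ] := XJ_lt.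
have LY : Yi < m + 5 by rewrite /Yi; lia.
have LZ : Zi < m + 5 by rewrite /Zi; lia.
have LC : Ci < m + 5 by rewrite /Ci; lia.
have L : forall i, i < m + 5 -> nth tape0 (mkseq (fun i => do_action (nth (None, MoveS)
   (dl (QC Start) (map read (init M' a).2)).2 i) (nth tape0 (init M' a).2 i)) (m + 5)) i
   = do_action (mkf (cstep (inr Start) (read (encode a)) None false false false false false)
      (map read (init M' a).2) i) (nth tape0 (init M' a).2 i).
  move=> i Hi; rewrite nth_mkseq //= nth_mkseq //.
have Cn : forall i, i < m + 5 -> 0 < i ->
  mkf (cstep (inr Start) (read (encode a)) None false false false false false)
      (map read (init M' a).2) i = (Some true, MoveS) ->
  ctr (nth tape0 (mkseq (fun i => do_action (nth (None, MoveS)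
   (dl (QC Start) (map read (init M' a).2)).2 i) (nth tape0 (init M' a).2 i)) (m + 5)) i) 0.
  move=> i Hi1 Hi2 E; rewrite L // init_nth // E.
  rewrite /ctr /tm /=; split => // k; rewrite /ctrf; destruct k; [reflexivity | by rewrite /= nth_nil].
split; split.
- by [].
- by rewrite size_mkseq.
- rewrite L // mkf0 nth_map_read /=.
  by have := tm_do (read (encode a), MoveS) (tm_encode a); rewrite (tm_read (tm_encode a)) upd_same.
- rewrite L // mkf1 nth_map_read init_nth //.
  by have := tm_do (read tape0, MoveS) tm_tape0; rewrite (tm_read tm_tape0) upd_same.
- move=> i /andP [Hi1 Hi2]; rewrite L; last lia.
  rewrite mkfM ?Hi1 ?Hi2 // nth_map_read init_nth; last lia.
  by apply: tm_neutral; exact: tm_tape0.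
- by apply: Cn => //; rewrite mkfX.
- by apply: Cn => //; rewrite mkfY.
- by apply: Cn => //; rewrite mkfZ.
- by apply: Cn => //; rewrite mkfC.
- by apply: Cn => //; rewrite mkfJ.
Qed.

Lemma initj_loop fi f : forall r (j : 'I_K.+1) jj c, val j = r ->
  Rel c (AC (inr (inl j)) fi 0 f 0 0 0 0 0 jj) ->
  Rel (iter r.+1 stp c) (AC (QC Scan) fi 0 f 0 0 0 0 0 (jj + r)).
Proof.
elim => [|r IH] j jj c Hj H.
  rewrite addn0 /=; apply: (Rel_next _ H) => //=.
  by rewrite Hj /aupd /= !upd_same.
rewrite iterSr.
have Hr : r < K.+1 by have := ltn_ord j; rewrite Hj; lia.
rewrite addnS -addSn; apply: (IH (inord r)); first exact: inordK.
apply: (Rel_next _ H) => //=.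
by rewrite Hj /aupd /= !upd_same.
Qed.

Lemma scan_exit fi h fq0 hq0 x y z cc j c :
  fi h = None ->
  Rel c (AC (QC Scan) fi h fq0 hq0 x y z cc j) ->
  Rel (stp c) (AC (QC Inc1) fi h fq0 hq0 x y z cc j).
Proof. move=> E H; astep H; by rewrite E /= -E !upd_same. Qed.

Lemma inc1_go fi h f hq0 x y z cc j c :
  Rel c (AC (QC Inc1) fi h f hq0 x y z cc j) ->
  Rel (stp c) (AC (QC Inc2) fi h f hq0 x.+1 y z cc j).
Proof. by move=> H; astep H. Qed.

Lemma inc2_go fi h f hq0 x y z cc j c :
  Rel c (AC (QC Inc2) fi h f hq0 x y z cc j) ->
  Rel (stp c) (AC (QC Ret) fi h f hq0 x.+1 y z cc j).
Proof. by move=> H; astep H. Qed.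

Definition xs (j : nat) := iter j gq (size a).+2.

Lemma gq_ge x : x <= gq x. Proof. rewrite /gq /sq; nia. Qed.
Lemma xs_mono i j : i <= j -> xs i <= xs j.
Proof.
move=> /subnK <-; elim: (j - i) => [|d IH] //.
by rewrite addSn /xs iterS; apply: leq_trans IH (gq_ge _).
Qed.

Lemma phaseA : exists t, t <= K + 2 * size a + 6 /\
  Rel (iter t stp (init M' a)) (AC (QC Test) fa 0 (fun _ => None) 0 (size a).+2 0 0 0 K).
Proof.
have H1 := Rel_init.
have H2 := initj_loop (r := K) (j := ord_max) erefl H1; norm H2.
have H3 := scan_loop (d := size a) (h := 0) _ H2.
have H3' : Rel (iter (size a + (K.+1 + 1)) stp (init M' a))
   (AC (QC Scan) fa (size a) (fun _ => None) 0 (size a) (size a) 0 0 K).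
  rewrite iterD; apply: H3 => i Hi; rewrite add0n (nth_map false) //.
have EN : fa (size a) = None by rewrite nth_default // size_map.
have H4 := scan_exit EN H3'; norm H4.
have H5 := inc1_go H4; norm H5.
have H6 := inc2_go H5; norm H6.
have H7 := ret_loop H6; norm H7.
eexists; split; last exact: H7.
lia.
Qed.

Lemma phaseB c0 : Rel c0 (AC (QC Test) fa 0 (fun _ => None) 0 (xs 0) 0 0 0 K) ->
  forall jj, jj <= K -> exists t, t <= 9 * jj * xs jj /\
  Rel (iter t stp c0) (AC (QC Test) fa 0 (fun _ => None) 0 (xs jj) 0 0 0 (K - jj)).
Proof.
move=> H0; elim => [|jj IH] Hj.
  by exists 0; rewrite subn0.
have [t [Ht H1]] := IH (ltnW Hj).
have E : K - jj = (K - jj.+1).+1 by lia.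
rewrite E in H1.
have [t' [Ht' H2]] := iteration H1.
exists (t' + t); split; last by rewrite iterD.
have M1 := xs_mono (leqnSn jj).
have E2 : gq (xs jj) = xs jj.+1 by rewrite /xs iterS.
rewrite E2 in Ht'.
nia.
Qed.

Lemma Rel_Sim c N y z cc :
  Rel c (AC (inl (otm_start M)) fa 0 (fun _ => None) 0 N y z cc 0) -> SimRel (init M a) c N.
Proof.
case: c => q ts [[/= Hq Hs H0 H1 HM] [HX HY HZ HC HJ]].
split => //=.
- by rewrite size_nseq.
- move=> i Hi.
  case: i Hi => [|[|i]] Hi.
  + by case: H0 => A B; split => // j; rewrite B.
  + by case: H1 => A B; split => // j; rewrite B nth_nil.
  + have [A B] := HM i.+2 Hi.
    have Nt' : forall k, nth tape0 (tape0 :: nseq (otm_k M) tape0) k = tape0.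
      by case=> [|k] //=; rewrite nth_nseq; case: ifP.
    have Nt : nth tape0 [:: encode a, tape0, tape0 & nseq (otm_k M) tape0] i.+2 = tape0.
      exact: Nt'.
    by split => [|j]; rewrite Nt // B nth_nil.
Qed.

Lemma clock_phase : exists t, t <= K + 2 * size a + 7 + 9 * K * xs K /\
  SimRel (init M a) (iter t stp (init M' a)) (xs K).
Proof.
have [t1 [Ht1 H1]] := phaseA.
have [t2 [Ht2 H2]] := phaseB H1 (leqnn K).
rewrite subnn -iterD in H2.
have H3 : Rel (stp (iter (t2 + t1) stp (init M' a)))
  (AC (inl (otm_start M)) fa 0 (fun _ => None) 0 (xs K) 0 0 0 0).
  by astep H2.
have H4 := Rel_Sim H3.
rewrite -iterS in H4.
eexists; split; last exact: H4.
lia.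
Qed.
End Loops.
End Machine.


Definition SPc c := SPpoly [:: c].
Definition SPn := SPpoly [:: 0; 1].
Definition gP (Q : sopoly) :=
  let S := SPadd (SPadd (SPapp Q) Q) (SPc 2) in SPmul S S.
Definition itP k := iter k gP (SPadd SPn (SPc 2)).
Definition Gl (l : nat -> nat) x := (l x + x + 2) * (l x + x + 2).

Lemma eval_SPc c l n : sopoly_eval (SPc c) l n = c.
Proof. by rewrite /= big_ord1 /= muln1. Qed.
Lemma eval_SPn l n : sopoly_eval SPn l n = n.
Proof. by rewrite /= !big_ord_recl big_ord0 /= /bump /=; lia. Qed.
Lemma eval_gP Q l n : sopoly_eval (gP Q) l n = Gl l (sopoly_eval Q l n).
Proof. by rewrite /gP; cbn [sopoly_eval]; rewrite eval_SPc /Gl. Qed.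
Lemma eval_itP k l n : sopoly_eval (itP k) l n = iter k (Gl l) (n + 2).
Proof.
elim: k => [|k IH].
  by rewrite /itP; change (sopoly_eval SPn l n + sopoly_eval (SPc 2) l n = n + 2); rewrite eval_SPn eval_SPc.
by rewrite /itP iterS -/(itP k) eval_gP IH.
Qed.

Lemma Gl_ge l x : x <= Gl l x /\ l x <= Gl l x /\ x * x <= Gl l x.
Proof. rewrite /Gl; split; [|split]; nia. Qed.

Lemma Gl_mono l l' x y : (forall z, l z <= l' z) -> (forall z w, z <= w -> l' z <= l' w) ->
  x <= y -> Gl l x <= Gl l' y.
Proof.
move=> H1 H2 Hxy; rewrite /Gl.
have : l x <= l' y by apply: leq_trans (H1 x) (H2 _ _ Hxy).
nia.
Qed.

Lemma iter_Gl_mono l l' k x y : (forall z, l z <= l' z) -> (forall z w, z <= w -> l' z <= l' w) ->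
  x <= y -> iter k (Gl l) x <= iter k (Gl l') y.
Proof. move=> H1 H2; elim: k => //= k IH Hxy; apply: Gl_mono => //; exact: IH. Qed.

Fixpoint Kof (P : sopoly) : nat :=
  match P with
  | SPpoly cs => size cs + \sum_(i < size cs) nth 0 cs i
  | SPadd P1 P2 => (maxn (Kof P1) (Kof P2)).+1
  | SPmul P1 P2 => (maxn (Kof P1) (Kof P2)).+1
  | SPapp P1 => (Kof P1).+1
  end.

Lemma expn_mono a b e : a <= b -> a ^ e <= b ^ e.
Proof. move=> H; elim: e => // e IH; rewrite !expnS; exact: leq_mul. Qed.

Section Bound.
Variable l : nat -> nat.
Hypothesis lmono : forall x y, x <= y -> l x <= l y.
Variable n : nat.
Notation f k := (iter k (Gl l) (n + 2)).

Lemma f_ge2 k : 2 <= f k.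
Proof. elim: k => [|k IH] /=; first lia. by have [H _] := Gl_ge l (f k); lia. Qed.
Lemma f_mono k k' : k <= k' -> f k <= f k'.
Proof.
move=> /subnK <-; elim: (k' - k) => // d IH.
by rewrite addSn iterS; apply: leq_trans IH _; have [] := Gl_ge l (f (d + k)).
Qed.
Lemma f_pow k : (n + 2) ^ (2 ^ k) <= f k.
Proof.
elim: k => [|k IH] /=; first by rewrite expn1.
rewrite expnS mulnC expnM (expnS _ 1) expn1 /=.
have [_ [_ H]] := Gl_ge l (f k).
apply: leq_trans H; exact: leq_mul.
Qed.

Lemma poly_bound cs :
  \sum_(i < size cs) nth 0 cs i * n ^ i <= f (size cs + \sum_(i < size cs) nth 0 cs i).
Proof.
set d := size cs. set C := \sum_(i < d) nth 0 cs i.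
have H1 : \sum_(i < d) nth 0 cs i * n ^ i <= C * (n + 2) ^ d.
  rewrite /C big_distrl /=; apply: leq_sum => i _; apply: leq_mul => //.
  apply: leq_trans (leq_pexp2l _ (ltnW (ltn_ord i))); last lia.
  by apply: expn_mono; lia.
apply: leq_trans H1 _; apply: leq_trans (f_pow _).
have H2 : d + C <= 2 ^ (d + C) by apply: ltnW; apply: ltn_expl.
apply: leq_trans (leq_pexp2l _ H2); last lia.
rewrite expnD mulnC leq_mul2l; apply/orP; right.
apply: leq_trans (ltnW (ltn_expl C (isT : 1 < 2))) _.
by apply: expn_mono; lia.
Qed.

Lemma sopoly_bound P : sopoly_eval P l n <= f (Kof P).
Proof.
elim: P => [cs|P1 IH1 P2 IH2|P1 IH1 P2 IH2|P1 IH1] /=.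
- exact: poly_bound.
- set k := maxn (Kof P1) (Kof P2).
  have A : sopoly_eval P1 l n <= f k by apply: leq_trans IH1 (f_mono (leq_maxl _ _)).
  have B : sopoly_eval P2 l n <= f k by apply: leq_trans IH2 (f_mono (leq_maxr _ _)).
  have [_ [_ C]] := Gl_ge l (f k). have D := f_ge2 k.
  rewrite ?iterS; nia.
- set k := maxn (Kof P1) (Kof P2).
  have A : sopoly_eval P1 l n <= f k by apply: leq_trans IH1 (f_mono (leq_maxl _ _)).
  have B : sopoly_eval P2 l n <= f k by apply: leq_trans IH2 (f_mono (leq_maxr _ _)).
  have [_ [_ C]] := Gl_ge l (f k).
  rewrite ?iterS; apply: leq_trans C; exact: leq_mul.
- rewrite ?iterS; have [_ [C _]] := Gl_ge l (f (Kof P1)).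
  apply: leq_trans C; exact: lmono.
Qed.
End Bound.


Lemma mem_cons_map (x y : bool) (s : seq bool) (L : seq (seq bool)) :
  (y :: s \in map (cons x) L) = (y == x) && (s \in L).
Proof.
apply/mapP/andP => [[s' Hs' [-> ->]]|[/eqP -> H]]; first by rewrite eqxx.
by exists s.
Qed.

Lemma mem_strings_upto n s : (s \in strings_upto n) = (size s <= n).
Proof.
elim: n s => [|n IH] s.
  by case: s.
rewrite /= in_cons; case: s => [|b s] //=.
rewrite !mem_cat !mem_cons_map in_nil orbF IH ltnS. by destruct b; rewrite /= ?andbF ?orbF.
Qed.

Lemma size_fun_ge (phi : str -> str) n s : size s <= n -> size (phi s) <= size_fun phi n.
Proof. by move=> H; apply: (@leq_bigmax_seq _ _ xpredT); rewrite ?mem_strings_upto. Qed.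

Lemma size_fun_le (phi : str -> str) n B :
  (forall s, size s <= n -> size (phi s) <= B) -> size_fun phi n <= B.
Proof.
move=> H; apply/bigmax_leqP_seq => s; rewrite mem_strings_upto => Hs _; exact: H.
Qed.

Lemma size_fun_mono (phi : str -> str) n n' : n <= n' -> size_fun phi n <= size_fun phi n'.
Proof. move=> H; apply: size_fun_le => s Hs; apply: size_fun_ge; exact: leq_trans Hs H. Qed.

Lemma size_fun_monotone (phi : str -> str) n : length_monotone phi ->
  size_fun phi n = size (phi (nseq n false)).
Proof.
move=> Hm; apply/eqP; rewrite eqn_leq; apply/andP; split.
  by apply: size_fun_le => s Hs; apply: Hm; rewrite size_nseq.
by apply: size_fun_ge; rewrite size_nseq.
Qed.


Lemma halted_eq (M : OTM) phi (c : config M) t t' :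
  (iter t (step phi) c).1 = otm_halt M -> (iter t' (step phi) c).1 = otm_halt M ->
  iter t (step phi) c = iter t' (step phi) c.
Proof.
move=> H H'; case: (leqP t t') => Ht.
  by rewrite -(subnK Ht) iter_halt.
by rewrite -(subnK (ltnW Ht)) iter_halt.
Qed.

Section Main.
Variable M : OTM.
Variable P : sopoly.
Notation K := (Kof P).
Notation MM := (M' M K).
Definition Pb := SPadd (SPmul (SPc (9 * K + 5)) (itP K)) (SPc (K + 8)).

Lemma eval_Pb l n : sopoly_eval Pb l n = (9 * K + 5) * iter K (Gl l) (n + 2) + (K + 8).
Proof. by rewrite /Pb; cbn [sopoly_eval]; rewrite !eval_SPc eval_itP. Qed.

Lemma xs_le phi a : xs phi a K <= iter K (Gl (size_fun phi)) (size a + 2).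
Proof.
rewrite /xs addn2.
have -> : iter K (gq phi) (size a).+2 = iter K (Gl (Lq phi)) (size a).+2.
  have E : forall x, gq phi x = Gl (Lq phi) x by move=> x; rewrite /gq /sq /Gl (addnC x).
  by elim: (K) => // k IH; rewrite !iterS IH E.
apply: iter_Gl_mono => //.
- by move=> z; rewrite /Lq; apply: size_fun_ge; rewrite size_nseq.
- by move=> z w; apply: size_fun_mono.
Qed.

Lemma xs_eq phi a : length_monotone phi ->
  iter K (Gl (size_fun phi)) (size a + 2) <= xs phi a K.
Proof.
move=> Hm; rewrite /xs addn2.
have -> : iter K (gq phi) (size a).+2 = iter K (Gl (Lq phi)) (size a).+2.
  have E : forall x, gq phi x = Gl (Lq phi) x by move=> x; rewrite /gq /sq /Gl (addnC x).
  by elim: (K) => // k IH; rewrite !iterS IH E.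
apply: iter_Gl_mono => //.
- by move=> z; rewrite /Lq size_fun_monotone.
- by move=> z w H; rewrite /Lq -!size_fun_monotone //; apply: size_fun_mono.
Qed.

Lemma total phi a :
  let T := sopoly_eval Pb (size_fun phi) (size a) in
  (run MM phi a T).1 = otm_halt MM /\
  exists T0, (iter T0 (step phi) (init MM a)).1 = otm_halt MM /\
    exists t1, t1 <= T0 /\ SimRel (init M a) (iter t1 (step phi) (init MM a)) (xs phi a K).
Proof.
have [t1 [Ht1 H1]] := clock_phase M K phi a.
have [t2 [Ht2 H2]] := sim_total phi H1.
rewrite -iterD in H2.
have HN := xs_le phi a.
have Hn : size a <= xs phi a K.
  apply: leq_trans (xs_mono phi a (leq0n K)); rewrite /xs /=; lia.
have HT : t2 + t1 <= sopoly_eval Pb (size_fun phi) (size a).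
  rewrite eval_Pb; nia.
split.
  by rewrite /run -(subnK HT) iter_halt.
exists (t2 + t1); split => //; exists t1; split => //; lia.
Qed.
End Main.

Theorem mainTheorem9 (F : (str -> str) -> str -> str) :
  restricted_polytime length_monotone F <->
  exists G : (str -> str) -> str -> str,
    polytime G /\
    (forall phi, length_monotone phi -> forall a : str, G phi a = F phi a).
Proof.
split.
- case=> M [P HMP].
  pose MM := M' M (Kof P).
  exists (fun phi a => output (run MM phi a (sopoly_eval (Pb P) (size_fun phi) (size a)))).
  split.
    exists MM, (Pb P) => phi _ a; split => //.
    by have [H _] := total M P phi a.
  move=> phi Hm a.
  have [H [T0 [HT0 [t1 [Ht1 H1]]]]] := total M P phi a.
  set T := sopoly_eval P (size_fun phi) (size a).
  have [Hh Ho] := HMP phi Hm a.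
  have HTN : T <= xs phi a (Kof P).
    apply: leq_trans (xs_eq P a Hm).
    apply: sopoly_bound => x y; exact: size_fun_mono.
  have [s [v' [_ H2]]] := sim_run phi H1 HTN.
  rewrite -iterD in H2.
  case: H2 => Hq _ _ HT _.
  rewrite /run -/T in Hh Ho.
  have Hq' : (iter (s + t1) (step phi) (init MM a)).1 = otm_halt MM by rewrite Hq Hh.
  rewrite /run (halted_eq H Hq') -Ho /output.
  apply: teq_contents; exact: HT.
- case=> G [[M [P H]] HG].
  exists M, P => phi Hm a.
  have [H1 H2] := H phi I a.
  by split => //; rewrite H2 HG.
Qed.
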